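(* Let $X$ be a nonnegative random variable with support $(0,+\infty)$, having finite CIGF $G_X(\alpha,\beta)$ for $(\alpha,\beta)\in D_X$. Assume the moment generating function $M_X(s)=\mathbb{E}(e^{sX})$ satisfies $M_X(s)<+\infty$ for all $s\in(-s_0,s_0)$, for some $s_0>0$. Then: (i) for all $s_1\in(-s_0,0)$, $s_2\in(0,s_0)$ and $(\alpha,\beta)\in D_X$ with $\alpha>0,\beta>0$ and $\alpha s_1+\beta s_2>0$, $$G_X(\alpha,\beta)\le\frac{1}{\alpha s_1+\beta s_2}[M_X(s_1)]^\alpha[M_X(s_2)]^\beta;$$ (ii) for all $s_1\in(-s_0,0)$, $s_2\in(0,s_0)$ and $(\alpha,\beta)\in D_X$ with $\alpha<0,\beta<0$ and $\alpha s_1+\beta s_2>0$, $$G_X(\alpha,\beta)\ge\frac{1}{\alpha s_1+\beta s_2}[M_X(s_1)]^\alpha[M_X(s_2)]^\beta.$$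
   Context: For a random variable $X$ with CDF $F$ and survival function $\overline F=1-F$, let $l=\inf\{x:F(x)>0\}$, $r=\sup\{x:\overline F(x)>0\}$. The CIGF of $X$ is $G_X(\alpha,\beta)=\int_l^r [F(x)]^\alpha[\overline F(x)]^\beta\,dx$ on $D_X=\{(\alpha,\beta)\in\mathbb{R}^2: G_X(\alpha,\beta)<\infty\}$. *)

(* Defs.v *)
From mathcomp Require Import all_boot all_order all_algebra.
From mathcomp Require Import all_classical all_reals all_analysis.
Set Implicit Arguments. Unset Strict Implicit. Unset Printing Implicit Defensive.
Import Order.TTheory GRing.Theory Num.Theory.
Local Open Scope classical_set_scope.
Local Open Scope ring_scope.

Section CIGF.
Context d (T : measurableType d) (R : realType) (P : probability T R).

Definition cdfR (X : {RV P >-> R}) (x : R) : R := fine (cdf X x).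
Definition survR (X : {RV P >-> R}) (x : R) : R := 1 - cdfR X x.

Definition lsupp (X : {RV P >-> R}) : \bar R :=
  ereal_inf [set x%:E | x in [set x | 0 < cdfR X x]].
Definition rsupp (X : {RV P >-> R}) : \bar R :=
  ereal_sup [set x%:E | x in [set x | 0 < survR X x]].

Definition CIGF (X : {RV P >-> R}) (a b : R) : \bar R :=
  (\int[lebesgue_measure]_(x in [set x : R | (lsupp X < x%:E < rsupp X)%E])
     ((cdfR X x) `^ a * (survR X x) `^ b)%:E)%E.

Definition in_DX (X : {RV P >-> R}) (a b : R) : Prop := (CIGF X a b < +oo)%E.

Definition mgf (X : {RV P >-> R}) (s : R) : \bar R :=
  'E_P[fun w => expR (s * X w)].

End CIGF.

(* Main.v *)
Require Import Defs.
From HB Require Import structures.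
From mathcomp Require Import all_boot all_order all_algebra.
From mathcomp Require Import all_classical all_reals all_analysis.
From mathcomp Require Import lra measurable_realfun.
Import Order.TTheory GRing.Theory Num.Theory.
Local Open Scope classical_set_scope.
Local Open Scope ring_scope.

Section Helpers.
Context d (T : measurableType d) (R : realType) (P : probability T R) (X : {RV P >-> R}).

Lemma mpre (f : {RV P >-> R}) (A : set R) : measurable A -> measurable (f @^-1` A).
Proof. by move=> mA; have := measurable_funPT f measurableT _ mA; rewrite setTI. Qed.

Definition negRV (w : T) : R := - X w.
Lemma negRV_mf : measurable_fun [set: T] negRV.
Proof. by apply: measurableT_comp. Qed.
HB.instance Definition _ := isMeasurableFun.Build _ _ T R negRV negRV_mf.

Lemma mgf_ge0 s : (0 <= mgf X s)%E.
Proof.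
by rewrite /mgf unlock; apply: integral_ge0 => w _; rewrite lee_fin expR_ge0.
Qed.

Lemma mgfE s : (mgf X s < +oo)%E -> mgf X s = (fine (mgf X s))%:E.
Proof.
move=> h; rewrite fineK //; rewrite ge0_fin_numE //; exact: mgf_ge0.
Qed.

Lemma cdf_fin x : cdf X x = (cdfR X x)%:E.
Proof. by rewrite /cdfR fineK // fin_num_measure. Qed.

Lemma cdfR_bound x s : s < 0 -> (mgf X s < +oo)%E ->
  cdfR X x <= fine (mgf X s) * expR (- (s * x)).
Proof.
move=> s0 hs; rewrite -lee_fin -cdf_fin EFinM -mgfE //.
have := @chernoff _ _ _ P (negRV : {RV P >-> R}) (- s) (- x).
rewrite oppr_gt0 => /(_ s0).
have -> : ('M_P (negRV : {RV P >-> R}) (- s) = mgf X s).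
  rewrite /mmt_gen_fun /mgf; apply: congr1; apply: funext => w /=.
  by rewrite /negRV mulrNN mulrC.
rewrite mulrNN; move=> h; apply: le_trans h.
rewrite /cdf /distribution /pushforward; apply: le_measure.
- by rewrite inE; apply: mpre.
- rewrite inE; rewrite [X in measurable X](_ : _ = (negRV : {RV P >-> R}) @^-1` `[- x, +oo[).
    by apply: mpre.
  by apply: funext => w /=; rewrite in_itv /= andbT.
- move=> w /=; rewrite in_itv /= /negRV => h; rewrite lerN2; done.
Qed.


Lemma survR_bound x s : 0 < s -> (mgf X s < +oo)%E ->
  survR X x <= fine (mgf X s) * expR (- (s * x)).
Proof.
move=> s0 hs; rewrite -lee_fin EFinM -mgfE //.
have -> : (survR X x)%:E = ccdf X x.
  by rewrite ccdf_1_cdf cdf_fin /survR EFinB.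
have := @chernoff _ _ _ P X s x s0.
have -> : ('M_P X s = mgf X s).
  rewrite /mmt_gen_fun /mgf; apply: congr1; apply: funext => w /=.
  by rewrite mulrC.
move=> h; apply: le_trans h.
rewrite /ccdf /distribution /pushforward; apply: le_measure.
- by rewrite inE; apply: mpre.
- rewrite inE; rewrite [X in measurable X](_ : _ = X @^-1` `[x, +oo[).
    by apply: mpre.
  by apply: funext => w /=; rewrite in_itv /= andbT.
- by move=> w /=; rewrite in_itv /= andbT => /ltW.
Qed.

Lemma cdfR_le x y : x <= y -> cdfR X x <= cdfR X y.
Proof.
move=> xy; rewrite -lee_fin -!cdf_fin; exact: cdf_nondecreasing.
Qed.

Lemma cdfR_pos x : lsupp X = 0%:E -> 0 < x -> 0 < cdfR X x.
Proof.
move=> hl x0; rewrite ltNge; apply/negP => hx.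
have : (x%:E <= lsupp X)%E.
  apply: le_ereal_inf_tmp => _ [y /= hy <-]; rewrite lee_fin.
  rewrite leNgt; apply/negP => yx.
  have := @cdfR_le _ _ (ltW yx); move: hy hx; set a := cdfR X y; set b := cdfR X x.
  clear hl; move=> *; lra.
by rewrite hl lee_fin leNgt x0.
Qed.

Lemma survR_pos x : rsupp X = +oo%E -> 0 < survR X x.
Proof.
move=> hr; rewrite ltNge; apply/negP => hx.
have : (rsupp X <= x%:E)%E.
  apply: ge_ereal_sup => _ [y /= hy <-]; rewrite lee_fin.
  rewrite leNgt; apply/negP => yx.
  have := @cdfR_le _ _ (ltW yx); move: hy hx; rewrite /survR.
  clear hr; set a := cdfR X y; set b := cdfR X x; move=> *; lra.
by rewrite hr.
Qed.

End Helpers.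

Section IntExp.
Context (R : realType).
Local Notation mu := (@lebesgue_measure R).

Lemma mexp (K c : R) : measurable_fun [set: R] (fun x => K * expR (- (c * x))).
Proof.
apply: measurable_funM => //; apply: measurableT_comp => //.
apply: measurableT_comp => //; exact: measurable_funM.
Qed.

Lemma int_exp (c K : R) : 0 < c -> 0 <= K ->
  (\int[mu]_(x in `]0%R, +oo[) (K * expR (- (c * x)))%:E = (K / c)%:E)%E.
Proof.
move=> c0 K0.
rewrite integral_itv_obnd_cbnd; last first.
  by apply/measurable_EFinP; apply: measurable_funTS; exact: mexp.
transitivity (\int[mu]_(x in `[0%R, +oo[) ((K / c)%:E * (exponential_pdf c x)%:E))%E.
  apply: eq_integral.
  move=> x; rewrite inE /= in_itv /= andbT => x0.
  rewrite exponential_pdfE ?(ltW c0) // -EFinM; congr EFin.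
  rewrite mulNr mulrA divfK ?gt_eqF //.
rewrite ge0_integralZl_EFin //; last 3 first.
- move=> x _; rewrite lee_fin; exact: exponential_pdf_ge0 (ltW c0) x.
- apply/measurable_EFinP; apply: measurable_funTS.
  exact: measurable_exponential_pdf.
- by rewrite divr_ge0 // ltW.
rewrite integral_mkcond restrict_EFin.
have -> : exponential_pdf c \_ `[0, +oo[ = exponential_pdf c.
  apply: funext => x; rewrite patchE; case: ifPn => // /negP xD.
  rewrite lt0_exponential_pdf // ltNge; apply/negP => x0; apply: xD.
  by rewrite inE /= in_itv /= andbT.
by rewrite integral_exponential_pdf // mule1.
Qed.

End IntExp.

Section PW.
Context (R : realType).

Lemma powR_pos (u a : R) : 0 < u -> u `^ a = expR (a * ln u).
Proof. by move=> u0; rewrite /powR gt_eqF. Qed.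

Lemma ln_bound {F M s x : R} : 0 < F -> 0 < M -> F <= M * expR (- (s * x)) ->
  ln F <= ln M - s * x.
Proof.
move=> F0 M0 h.
have e0 : 0 < M * expR (- (s * x)) by rewrite mulr_gt0 // expR_gt0.
have := h; rewrite -ler_ln ?posrE // lnM ?posrE ?expR_gt0 // expRK.
done.
Qed.

Lemma pw (F S M1 M2 a b s1 s2 x : R) : 0 < F -> 0 < S -> 0 < M1 -> 0 < M2 ->
  F <= M1 * expR (- (s1 * x)) -> S <= M2 * expR (- (s2 * x)) ->
  (0 < a -> 0 < b ->
    F `^ a * S `^ b <= M1 `^ a * M2 `^ b * expR (- ((a * s1 + b * s2) * x))) /\
  (a < 0 -> b < 0 ->
    M1 `^ a * M2 `^ b * expR (- ((a * s1 + b * s2) * x)) <= F `^ a * S `^ b).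
Proof.
move=> F0 S0 M10 M20 hF hS.
have lF := ln_bound F0 M10 hF; have lS := ln_bound S0 M20 hS.
rewrite !powR_pos // -!expRD !ler_expR.
move: lF lS; set u := ln F; set v := ln S; set m1 := ln M1; set m2 := ln M2.
move=> lF lS; split => ha hb; nra.
Qed.

End PW.

Theorem corollary1 (d : measure_display) (T : measurableType d) (R : realType)
  (P : probability T R) (X : {RV P >-> R}) (s0 : R) :
  (forall w, 0 <= X w) ->
  lsupp X = 0%:E -> rsupp X = +oo%E ->
  0 < s0 ->
  (forall s, - s0 < s < s0 -> (mgf X s < +oo)%E) ->
  (forall s1 s2 a b, - s0 < s1 < 0 -> 0 < s2 < s0 -> in_DX X a b ->
     0 < a -> 0 < b -> 0 < a * s1 + b * s2 ->
     (CIGF X a b <=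
       ((a * s1 + b * s2)^-1 * (fine (mgf X s1)) `^ a * (fine (mgf X s2)) `^ b)%:E)%E)
  /\
  (forall s1 s2 a b, - s0 < s1 < 0 -> 0 < s2 < s0 -> in_DX X a b ->
     a < 0 -> b < 0 -> 0 < a * s1 + b * s2 ->
     (((a * s1 + b * s2)^-1 * (fine (mgf X s1)) `^ a * (fine (mgf X s2)) `^ b)%:E
       <= CIGF X a b)%E).
Proof.
move=> X0 hl hr s00 hmgf.
have Dset : [set x : R | (lsupp X < x%:E < rsupp X)%E] = `]0%R, +oo[%classic.
  rewrite hl hr; apply/seteqP; split => x /=; rewrite in_itv /= andbT lte_fin ltry andbT //.
have mcdf : measurable_fun [set: R] (cdfR X).
  apply: measurableT_comp => //; exact: cdf_measurable.
have msurv : measurable_fun [set: R] (survR X).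
  apply: measurable_funB => //.
have mint (a b : R) : measurable_fun (`]0%R, +oo[ : set R) (fun x => (cdfR X x `^ a * survR X x `^ b)%:E).
  apply/measurable_EFinP; apply: measurable_funTS; apply: measurable_funM.
    exact: measurableT_comp (measurable_powR a) mcdf.
  exact: measurableT_comp (measurable_powR b) msurv.
have key s1 s2 a b x : - s0 < s1 < 0 -> 0 < s2 < s0 -> 0 < x ->
  (0 < a -> 0 < b -> cdfR X x `^ a * survR X x `^ b <=
     fine (mgf X s1) `^ a * fine (mgf X s2) `^ b * expR (- ((a * s1 + b * s2) * x))) /\
  (a < 0 -> b < 0 -> fine (mgf X s1) `^ a * fine (mgf X s2) `^ b * expR (- ((a * s1 + b * s2) * x))
     <= cdfR X x `^ a * survR X x `^ b).
  move=> /andP[s1a s1b] /andP[s2a s2b] x0.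
  have h1 : (mgf X s1 < +oo)%E by apply: hmgf; rewrite s1a /= (lt_trans s1b s00).
  have h2 : (mgf X s2 < +oo)%E.
    by apply: hmgf; rewrite s2b andbT (lt_trans _ s2a) // oppr_lt0.
  have F0 := cdfR_pos _ _ _ _ X x hl x0; have S0 := survR_pos _ _ _ _ X x hr.
  have hF := cdfR_bound _ _ _ _ X x s1 s1b h1; have hS := survR_bound _ _ _ _ X x s2 s2a h2.
  apply: pw => //.
  - by have := lt_le_trans F0 hF; rewrite pmulr_lgt0 // expR_gt0.
  - by have := lt_le_trans S0 hS; rewrite pmulr_lgt0 // expR_gt0.
split.
- move=> s1 s2 a b hs1 hs2 _ a0 b0 c0.
  set K := fine (mgf X s1) `^ a * fine (mgf X s2) `^ b.
  have -> : (a * s1 + b * s2)^-1 * fine (mgf X s1) `^ a * fine (mgf X s2) `^ b = K / (a * s1 + b * s2).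
    by rewrite /K -mulrA mulrC.
  rewrite -int_exp // ?/K ?mulr_ge0 ?powR_ge0 // /CIGF Dset.
  apply: ge0_le_integral => //.
  + by move=> x _; rewrite lee_fin mulr_ge0 ?powR_ge0.
  + by [exact: mint | apply/measurable_EFinP; apply: measurable_funTS; exact: mexp].
  + by [exact: mint | apply/measurable_EFinP; apply: measurable_funTS; exact: mexp].
  + move=> x; rewrite /= in_itv /= andbT => x0; rewrite lee_fin.
    by have [k1 k2] := key s1 s2 a b x hs1 hs2 x0; exact: k1 a0 b0.
- move=> s1 s2 a b hs1 hs2 _ a0 b0 c0.
  set K := fine (mgf X s1) `^ a * fine (mgf X s2) `^ b.
  have -> : (a * s1 + b * s2)^-1 * fine (mgf X s1) `^ a * fine (mgf X s2) `^ b = K / (a * s1 + b * s2).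
    by rewrite /K -mulrA mulrC.
  rewrite -int_exp // ?/K ?mulr_ge0 ?powR_ge0 // /CIGF Dset.
  apply: ge0_le_integral => //.
  + by move=> x _; rewrite lee_fin !mulr_ge0 ?powR_ge0 ?expR_ge0.
  + by [exact: mint | apply/measurable_EFinP; apply: measurable_funTS; exact: mexp].
  + by [exact: mint | apply/measurable_EFinP; apply: measurable_funTS; exact: mexp].
  + move=> x; rewrite /= in_itv /= andbT => x0; rewrite lee_fin.
    by have [k1 k2] := key s1 s2 a b x hs1 hs2 x0; exact: k2 a0 b0.
Qed.
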